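(* The map $f \mapsto C^{\wedge}(f)$, defined on the set $\mathbb{N}_0[\mathbb{R} \times \mathbb{R}_{>0}]$ of barcodes, is one-to-one.
   Context: A barcode is a finite formal sum $f = \sum_{i=1}^n x^{\alpha_i}y^{\ell_i}$ with $n\ge 0$, $\alpha_i \in \mathbb{R}$, $\ell_i \in \mathbb{R}_{>0}$ (i.e. a finite multiset of pairs $(\alpha_i,\ell_i)$, written as an element of the monoid semiring $\mathbb{N}_0[\mathbb{R}\times\mathbb{R}_{>0}]$ with indeterminates $x,y$ and real exponents). Its $p$-th exterior power ($p\ge1$) is the barcode $f^{\wedge p} = \sum_{1\le i_1<\cdots<i_p\le n} x^{\alpha_{i_1}+\cdots+\alpha_{i_p}}y^{\min\{\ell_{i_1},\ldots,\ell_{i_p}\}}$ (zero if $p>n$). Set $B(f) = \sum_i x^{\alpha_i}$, $D(f) = \sum_i x^{\alpha_i+\ell_i}$, and the critical series $C(f) = B(f)-D(f) \in \mathbb{Z}[\mathbb{R}]$ (finite integer combinations of $x^g$, $g\in\mathbb{R}$). The exterior critical series of $f$ is $C^{\wedge}(f) = \sum_{p=1}^{\infty} C(f^{\wedge p})z^p$, with $z$ a further indeterminate (a finite sum). *)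

(* Defs.v *)
From HB Require Import structures.
From mathcomp Require Import all_boot all_order all_algebra.
From mathcomp Require Import reals.
Set Implicit Arguments. Unset Strict Implicit. Unset Printing Implicit Defensive.
Import Order.TTheory GRing.Theory Num.Theory.
Local Open Scope ring_scope.

(* A barcode  f = sum_i x^{alpha_i} y^{ell_i}  is a finite multiset of pairs
   (alpha_i, ell_i); we represent it by a list [s], two lists denoting the same
   barcode iff they are permutations of each other ([perm_eq]). *)
Definition is_barcode {R : realType} (s : seq (R * R)) : bool :=
  all (fun a => 0 < a.2) s.

(* p-th exterior power: the list of (alpha_{i_1}+...+alpha_{i_p},
   min(ell_{i_1},...,ell_{i_p})) over all index tuples i_1 < ... < i_p,
   enumerated recursively (either the first bar is used or it is not). *)
Fixpoint wedge {R : realType} (s : seq (R * R)) (p : nat) : seq (R * R) :=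
  match s with
  | [::] => [::]
  | x :: s' =>
    match p with
    | 0 => [::]
    | 1 => x :: wedge s' 1
    | S p' => [seq (x.1 + y.1, Num.min x.2 y.2) | y <- wedge s' p'] ++ wedge s' p
    end
  end.

(* Critical series C(f) = B(f) - D(f) in Z[R], given by its coefficient
   function g |-> (coefficient of x^g). *)
Definition crit {R : realType} (s : seq (R * R)) (g : R) : int :=
  (count (fun a => a.1 == g) s)%:Z - (count (fun a => a.1 + a.2 == g) s)%:Z.

(* Exterior critical series: coefficient of z^p x^g; the z^0 coefficient is 0. *)
Definition ext_crit {R : realType} (s : seq (R * R)) (p : nat) (g : R) : int :=
  if p == 0%N then 0 else crit (wedge s p) g.

(* Main.v *)
Require Import Defs.
From HB Require Import structures.
From mathcomp Require Import all_boot all_order all_algebra.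
From mathcomp Require Import reals.
From mathcomp Require Import zify ring lra.
Set Implicit Arguments. Unset Strict Implicit. Unset Printing Implicit Defensive.
Import Order.TTheory GRing.Theory Num.Theory.
Local Open Scope ring_scope.

Section W.
Variable R : realType.
Implicit Types (s t : seq (R * R)) (x y : R * R).

Definition fx x (y : R * R) : R * R := (x.1 + y.1, Num.min x.2 y.2).

Lemma wedge_cons_cong x s t : (forall q, perm_eq (wedge s q) (wedge t q)) ->
  forall p, perm_eq (wedge (x :: s) p) (wedge (x :: t) p).
Proof.
move=> H [|[|p]] //=; first by rewrite perm_cons.
by rewrite perm_cat ?perm_map.
Qed.

Lemma fx_comm x y z : fx x (fx y z) = fx y (fx x z).
Proof. by rewrite /fx /= addrCA minCA. Qed.

Lemma wedge_swap x y s p : perm_eq (wedge (x :: y :: s) p) (wedge (y :: x :: s) p).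
Proof.
case: p => [|[|[|p]]] //=.
- by rewrite -[x :: y :: _]/([:: x] ++ [:: y] ++ _) perm_catCA.
- have -> : (x.1 + y.1, Num.min x.2 y.2) = (y.1 + x.1, Num.min y.2 x.2).
    by rewrite addrC minC.
  by rewrite perm_cons perm_catCA.
- rewrite !map_cat -!map_comp -!catA.
  have -> : [seq ((fun y0 => (x.1 + y0.1, Num.min x.2 y0.2)) \o
        (fun y0 => (y.1 + y0.1, Num.min y.2 y0.2))) i | i <- wedge s p.+1]
      = [seq ((fun y0 => (y.1 + y0.1, Num.min y.2 y0.2)) \o
        (fun y0 => (x.1 + y0.1, Num.min x.2 y0.2))) i | i <- wedge s p.+1].
    by apply: eq_map => z /=; rewrite addrCA minCA.
  by rewrite perm_cat2l perm_catCA.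
Qed.

Lemma wedge_ins x s1 s2 p : perm_eq (wedge (x :: s1 ++ s2) p) (wedge (s1 ++ x :: s2) p).
Proof.
elim: s1 p => [|y s1 IH] p //=.
apply: perm_trans (wedge_swap _ _ _ _) _.
exact: wedge_cons_cong.
Qed.

Lemma wedge_perm s t : perm_eq s t -> forall p, perm_eq (wedge s p) (wedge t p).
Proof.
elim: s t => [|x s IH] t.
  by rewrite perm_sym => /perm_nilP -> p.
move=> Hst p.
have xt : x \in t by rewrite -(perm_mem Hst) mem_head.
case/splitPr: xt Hst => t1 t2 Hst.
have Hs : perm_eq s (t1 ++ t2).
  by rewrite -(perm_cons x); apply: perm_trans Hst _; rewrite -(cat1s x t2) perm_catCA.
apply: perm_trans (wedge_ins _ _ _ _).
exact: wedge_cons_cong (IH _ Hs) p.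
Qed.

Lemma crit_perm s t g : perm_eq s t -> crit s g = crit t g.
Proof. by move=> /permP H; rewrite /crit !H. Qed.

Lemma ext_crit_perm s t p g : perm_eq s t -> ext_crit s p g = ext_crit t p g.
Proof.
move=> H; rewrite /ext_crit.
by case: eqP => //; rewrite (crit_perm _ (wedge_perm H p)).
Qed.

Lemma wedge_large s p : (size s < p)%N -> wedge s p = [::].
Proof.
elim: s p => [|x s IH] [|[|p]] //= H.
by rewrite !IH //; lia.
Qed.

Lemma wedge_le c s p : all (fun y => y.2 <= c) s -> all (fun y => y.2 <= c) (wedge s p).
Proof.
elim: s p => [|x s IH] [|[|p]] //= /andP[hx hs].
  by rewrite hx IH.
rewrite all_cat IH // andbT all_map.
apply/allP => y /(allP (IH _ hs)) hy /=.
by rewrite ge_min hx.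
Qed.

Lemma ext_crit0 s g : ext_crit s 0 g = 0.
Proof. by []. Qed.

Lemma ext_crit_nil p g : @ext_crit R [::] p g = 0.
Proof. by rewrite /ext_crit; case: p => //. Qed.

Lemma ext_crit_large s p g : (size s < p)%N -> ext_crit s p g = 0.
Proof. by move=> H; rewrite /ext_crit wedge_large //; case: eqP. Qed.

Lemma eq_sub (a h c : R) : (a == h - c) = (c + a == h).
Proof. by rewrite eq_sym subr_eq addrC eq_sym. Qed.

Lemma ext_crit_cons x s : all (fun y => y.2 <= x.2) s -> forall p h,
  ext_crit (x :: s) p h = ext_crit s p h
    + (if p is p'.+1 then ext_crit s p' (h - x.1) else 0)
    + (if p == 1%N then ((x.1 == h)%:Z - (x.1 + x.2 == h)%:Z) else 0).
Proof.
move=> Hs [|[|p]] h.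
- by rewrite /ext_crit /= !addr0.
- rewrite /ext_crit /= /crit /= addr0.
  by rewrite !PoszD; ring.
have -> : (p.+2 == 1%N) = false by [].
rewrite addr0 /ext_crit /= /crit !count_cat !count_map.
have Hw := wedge_le p.+1 Hs.
have -> : count (preim (fun y => (x.1 + y.1, Num.min x.2 y.2))
   (fun a => a.1 == h)) (wedge s p.+1) = count (fun a => a.1 == h - x.1) (wedge s p.+1).
  by apply: eq_count => a /=; rewrite eq_sub.
have -> : count (preim (fun y => (x.1 + y.1, Num.min x.2 y.2))
   (fun a => a.1 + a.2 == h)) (wedge s p.+1) = count (fun a => a.1 + a.2 == h - x.1) (wedge s p.+1).
  apply: eq_in_count => a /(allP Hw) /= ha.
  by rewrite eq_sub (min_r ha) addrA.
rewrite !PoszD; ring.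
Qed.
End W.

Section P.
Variable R : realType.
Implicit Types (s t : seq (R * R)) (x y : R * R) (w : seq (R * int)).

Definition Phi (b : R) (N : nat) (F : nat -> R -> int) (h : R) : int :=
  \sum_(0 <= p < N) (-1)^+p * F p (h + p%:R * b).

Lemma Phi_cons x s b N h : all (fun y => y.2 <= x.2) s -> (size s + 2 <= N)%N ->
  Phi b N (ext_crit (x :: s)) h = Phi b N (ext_crit s) h
    - Phi b N (ext_crit s) (h - (x.1 - b))
    - (h == x.1 - b)%:Z + (h == x.1 - b + x.2)%:Z.
Proof.
move=> Hs HN.
case: N HN => [|[|K]] HN; [by rewrite addn2 in HN|by rewrite addn2 in HN|].
rewrite /Phi.
under eq_bigr => p _ do rewrite (ext_crit_cons Hs) !mulrDr.
rewrite !big_split /=.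
have eB : \sum_(0 <= i < K.+2) (-1) ^+ i *
    (match i with 0%N => 0 | p'.+1 => ext_crit s p' (h + i%:R * b - x.1) end)
   = - \sum_(0 <= i < K.+2) (-1) ^+ i * ext_crit s i (h - (x.1 - b) + i%:R * b).
  rewrite [in RHS]big_nat_recr //= ext_crit_large; last by lia.
  rewrite mulr0 addr0 big_nat_recl // mulr0 add0r -sumrN.
  apply: eq_bigr => p _.
  rewrite exprS mulN1r mulNr; congr (- (_ * _)).
  by congr (ext_crit _ _ _); rewrite -addn1 natrD; ring.
have eC : \sum_(0 <= i < K.+2) (-1) ^+ i *
    (if i == 1%N then (x.1 == h + i%:R * b)%:Z - (x.1 + x.2 == h + i%:R * b)%:Z else 0)
   = - (h == x.1 - b)%:Z + (h == x.1 - b + x.2)%:Z.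
  rewrite big_nat_recl // mulr0 add0r big_nat_recl // big1 ?addr0; last first.
    by move=> p _ /=; rewrite mulr0.
  rewrite /= expr1 mul1r mulN1r opprB.
  have -> : (x.1 == h + b) = (h == x.1 - b) by rewrite eq_sub addrC.
  have -> : (x.1 + x.2 == h + b) = (h == x.1 - b + x.2).
    by apply/eqP/eqP => H; lra.
  by rewrite addrC.
rewrite eB eC; ring.
Qed.

Definition coef w (h : R) : int := \sum_(e <- w | e.1 == h) e.2.
Definition del w : R := \sum_(e <- w) e.1 * e.2%:~R.
Definition eps w : int := \sum_(e <- w) e.2.
Definition shn (c : R) w := [seq (e.1 + c, - e.2) | e <- w].

Fixpoint vl (b L : R) s : seq (R * int) :=
  match s with
  | [::] => [:: (0, 1%:Z); (L, -1)]
  | x :: s' => vl b L s' ++ shn (x.1 - b) (vl b L s')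
                ++ [:: (x.1 - b + L, -1); (x.1 - b + x.2, 1%:Z)]
  end.

Lemma coef_cat w1 w2 h : coef (w1 ++ w2) h = coef w1 h + coef w2 h.
Proof. by rewrite /coef big_cat. Qed.

Lemma coef_shn c w h : coef (shn c w) h = - coef w (h - c).
Proof.
rewrite /coef big_map -sumrN big_mkcond [RHS]big_mkcond /=.
apply: eq_bigr => e _.
by rewrite eq_sub addrC; case: ifP.
Qed.

Lemma coef_cons e w h : coef (e :: w) h = (if e.1 == h then e.2 else 0) + coef w h.
Proof. by rewrite /coef big_cons; case: ifP => //; rewrite add0r. Qed.

Lemma coef_nil h : coef [::] h = 0.
Proof. by rewrite /coef big_nil. Qed.

Definition srt s := sorted (fun x y : R * R => y.2 <= x.2) s.

Lemma srt_cons x s : srt (x :: s) -> srt s /\ all (fun y => y.2 <= x.2) s.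
Proof.
move=> H; split; first exact: path_sorted H.
have := order_path_min _ H; apply.
by move=> a b c /= h1 h2; apply: le_trans h2 h1.
Qed.

Lemma Phi_nil b N h : Phi b N (@ext_crit R [::]) h = 0.
Proof. by rewrite /Phi big1 // => p _; rewrite ext_crit_nil mulr0. Qed.

Lemma vl_coef b L N s : srt s -> (size s + 2 <= N)%N -> forall h,
  coef (vl b L s) h = Phi b N (ext_crit s) h + (h == 0)%:Z - (h == L)%:Z.
Proof.
elim: s => [|x s IH] Hs HN h.
  rewrite /= !coef_cons coef_nil Phi_nil add0r addr0 ![_ == h]eq_sym.
  by case: (h == 0); case: (h == L).
have [Hs' Hx] := srt_cons Hs.
have HN' : (size s + 2 <= N)%N by move: HN => /=; lia.
rewrite /= !coef_cat !coef_cons coef_nil coef_shn !(IH Hs' HN').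
rewrite Phi_cons //.
set c := x.1 - b.
rewrite subr_eq0 subr_eq ![_ + _ == h]eq_sym (addrC L c).
case: (h == 0); case: (h == L); case: (h == c); case: (h == c + L);
  case: (h == c + x.2); rewrite /=; ring.
Qed.

Lemma eps_cat w1 w2 : eps (w1 ++ w2) = eps w1 + eps w2.
Proof. by rewrite /eps big_cat. Qed.
Lemma del_cat w1 w2 : del (w1 ++ w2) = del w1 + del w2.
Proof. by rewrite /del big_cat. Qed.
Lemma eps_shn c w : eps (shn c w) = - eps w.
Proof. by rewrite /eps big_map -sumrN. Qed.
Lemma del_shn c w : del (shn c w) = - del w - c * (eps w)%:~R.
Proof.
rewrite /del /eps big_map rmorph_sum mulr_sumr -sumrN -sumrB.
apply: eq_bigr => e _ /=; by rewrite intrN mulrN mulrDl opprD.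
Qed.

Lemma eps_vl b L s : eps (vl b L s) = 0.
Proof.
elim: s => [|x s IH] /=; first by rewrite /eps !big_cons big_nil.
rewrite !eps_cat eps_shn IH /eps !big_cons big_nil /=; ring.
Qed.

Lemma del_vl b L s : del (vl b L s) = (if s is x :: _ then x.2 else 0) - L.
Proof.
case: s => [|x s] /=; first by rewrite /del !big_cons big_nil /=; ring.
rewrite !del_cat del_shn eps_vl /del !big_cons big_nil /=; ring.
Qed.

End P.

Section Q.
Variable R : realType.
Implicit Types (s t : seq (R * R)) (x y : R * R) (w : seq (R * int)).

Lemma coef_out w g : g \notin map fst w -> coef w g = 0.
Proof.
move=> H; rewrite /coef big1_seq // => e /andP[/eqP eg ew].
by rewrite -eg (map_f fst ew) in H.
Qed.

Lemma coef0_del w : (forall h, coef w h = 0) -> del w = 0.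
Proof.
move=> H; set U := undup (map fst w).
have uU : uniq U by apply: undup_uniq.
have -> : del w = \sum_(e <- w) \sum_(g <- U) (if e.1 == g then g * e.2%:~R else 0).
  rewrite /del; apply: eq_big_seq => e ew.
  have eU : e.1 \in U by rewrite mem_undup map_f.
  rewrite (big_rem _ eU) /= eqxx big1_seq ?addr0 // => g /andP[_ gU].
  case: eqP => // eg; move: gU; rewrite -eg.
  by rewrite (mem_rem_uniqF _ uU).
rewrite exchange_big big1_seq // => g _ /=.
rewrite -big_mkcond /=.
have -> : \sum_(i <- w | i.1 == g) g * i.2%:~R = \sum_(i <- w | i.1 == g) (g * i.2%:~R : R) by [].
rewrite -mulr_sumr -rmorph_sum.
by have := H g; rewrite /coef => ->; rewrite mulr0.
Qed.

Lemma coef_shift0 w (c : R) : c != 0 -> (forall h, coef w h = coef w (h - c)) ->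
  forall h, coef w h = 0.
Proof.
move=> cn H h0; apply/eqP; apply: contraT => nz.
have Hk : forall k : nat, coef w (h0 + k%:R * c) = coef w h0.
  elim=> [|k IH]; first by rewrite mul0r addr0.
  rewrite H -IH; congr (coef w _); rewrite -addn1 natrD; ring.
set K := [seq h0 + k%:R * c | k <- iota 0 (size w).+1].
have uK : uniq K.
  rewrite map_inj_uniq ?iota_uniq // => i j /addrI /(mulIf cn) /eqP.
  by rewrite eqr_nat => /eqP.
have sK : {subset K <= map fst w}.
  move=> g /mapP[k _ ->]; apply: contraT => ng.
  by move: nz; rewrite -(Hk k) coef_out // eqxx.
have := uniq_leq_size uK sK.
by rewrite size_map size_map size_iota ltnn.
Qed.

Lemma vl_mem b L s : 0 < L -> srt s -> all (fun y => y.2 <= L) s ->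
  (forall h, coef (vl b L s) h = 0) -> (b, L) \in s.
Proof.
move=> L0; elim: s => [|[a l] s IH] Hs HL H0.
  have := coef0_del H0; rewrite del_vl /= add0r => /eqP.
  by rewrite oppr_eq0 => /eqP L00; move: L0; rewrite L00 ltxx.
have [Hs' Hx] := srt_cons Hs.
move: HL => /= /andP[lL HL].
have := coef0_del H0; rewrite del_vl /= => /eqP; rewrite subr_eq0 => /eqP el.
have [ab|ab] := eqVneq a b; first by rewrite ab el mem_head.
rewrite in_cons IH ?orbT //.
apply: (@coef_shift0 _ (a - b)); first by rewrite subr_eq0.
move=> h; have := H0 h.
rewrite /= !coef_cat !coef_cons coef_nil coef_shn /= el.
case: (_ == h) => /= E; lia.
Qed.

End Q.

Section M.
Variable R : realType.
Implicit Types (s t f g : seq (R * R)) (x y : R * R) (w : seq (R * int)).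

Definition le2 := fun x y : R * R => y.2 <= x.2.

Lemma le2_total : total le2.
Proof. by move=> x y; rewrite /le2 le_total. Qed.

Lemma coef_vl_head b M L s h :
  coef (vl b M ((b, L) :: s)) h = - (M == h)%:Z + (L == h)%:Z.
Proof.
rewrite /= !coef_cat !coef_cons coef_nil coef_shn /= subrr !add0r subr0.
case: (M == h); case: (L == h); rewrite /=; lia.
Qed.

Lemma key f g b L : is_barcode f -> (forall p h, ext_crit f p h = ext_crit g p h) ->
  (b, L) \in f -> all (fun y => y.2 <= L) f ->
  (b, L) \in g /\ all (fun y => y.2 <= L) g.
Proof.
move=> Bf E bf Lf.
have L0 : 0 < L by have := allP Bf _ bf.
set f' := rem (b, L) f.
set f2 := (b, L) :: sort le2 f'.
have pf : perm_eq f f2.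
  apply: perm_trans (perm_to_rem bf) _; rewrite /f2 perm_cons.
  by rewrite perm_sym perm_sort.
have sf : srt f2.
  rewrite /srt /f2 /= path_min_sorted ?sort_sorted //; first exact: le2_total.
  rewrite all_sort; apply/allP => y yf; rewrite /le2 /=.
  exact: (allP Lf) (mem_rem yf).
set g2 := sort le2 g.
have pg : perm_eq g g2 by rewrite perm_sym perm_sort.
have sg : srt g2 by apply: sort_sorted; exact: le2_total.
set N := (size f + size g).+2.
have szf : (size f2 + 2 <= N)%N by rewrite -(perm_size pf) /N addn2 !ltnS leq_addr.
have szg : (size g2 + 2 <= N)%N by rewrite -(perm_size pg) /N addn2 !ltnS leq_addl.
have EPhi : forall h, Phi b N (ext_crit f2) h = Phi b N (ext_crit g2) h.
  move=> h; apply: eq_bigr => p _.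
  by rewrite -(ext_crit_perm _ _ pf) E (ext_crit_perm _ _ pg).
have cv : forall M h, coef (vl b M g2) h = - (M == h)%:Z + (L == h)%:Z.
  by move=> M h; rewrite (vl_coef b M sg szg) -EPhi -(vl_coef b M sf szf) coef_vl_head.
have cz : forall M h, coef (vl b M g2 ++ [:: (M, 1%:Z); (L, -1)]) h = 0.
  move=> M h; rewrite coef_cat !coef_cons coef_nil cv /=.
  by case: (M == h); case: (L == h); rewrite /=; lia.
have dz : forall M, del (vl b M g2) + M - L = 0.
  move=> M; have := coef0_del (cz M).
  by rewrite del_cat /del !big_cons big_nil /= mulr1 mulrN1 addr0 addrA.
have Lg : all (fun y => y.2 <= L) g2 -> (b, L) \in g /\ all (fun y => y.2 <= L) g.
  move=> HL; split; last by rewrite (perm_all _ pg).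
  rewrite (perm_mem pg); apply: vl_mem => // h.
  by rewrite cv; case: (L == h); rewrite /=; lia.
move: sg Lg dz; rewrite /g2; case: (sort le2 g) => [|y g'] sg Lg dz.
  by have := dz 0; rewrite del_vl /= => H; lra.
have := dz y.2; rewrite del_vl /= => H.
have yL : y.2 = L by lra.
apply: Lg; have [_ Hy] := srt_cons sg.
by rewrite /= yL lexx; rewrite yL in Hy.
Qed.

Lemma find_max s : s != [::] -> exists2 x, x \in s & all (fun y => y.2 <= x.2) s.
Proof.
elim: s => [|x s IH] // _.
case: (eqVneq s [::]) => [->|ns].
  by exists x; rewrite ?mem_head //= lexx.
have [z zs Hz] := IH ns.
case: (leP z.2 x.2) => zx.
  exists x; first exact: mem_head.
  rewrite /= lexx; apply/allP => y ys; exact: le_trans (allP Hz _ ys) zx.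
exists z; first by rewrite in_cons zs orbT.
by rewrite /= Hz (ltW zx).
Qed.

Lemma main n : forall f g, size f = n -> is_barcode f -> is_barcode g ->
  (forall p h, ext_crit f p h = ext_crit g p h) -> perm_eq f g.
Proof.
elim: n => [|n IH] f g sf Bf Bg E.
  have ef := size0nil sf; rewrite ef.
  case: (eqVneq g [::]) => [->//|ng].
  have [[b L] bg Lg] := find_max ng.
  have [H _] := key Bg (fun p h => esym (E p h)) bg Lg.
  by rewrite ef in H.
have nf : f != [::] by apply/eqP => ef; rewrite ef in sf.
have [[b L] bf Lf] := find_max nf.
have [bg Lg] := key Bf E bf Lf.
set f' := rem (b, L) f; set g' := rem (b, L) g.
have pf := perm_to_rem bf; have pg := perm_to_rem bg.
have Lf' : all (fun y => y.2 <= (b, L).2) f'.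
  by apply/allP => y /mem_rem yf; exact: (allP Lf).
have Lg' : all (fun y => y.2 <= (b, L).2) g'.
  by apply/allP => y /mem_rem yg; exact: (allP Lg).
have E' : forall p h, ext_crit f' p h = ext_crit g' p h.
  elim=> [|p IHp] h; first by [].
  have := E p.+1 h.
  rewrite (ext_crit_perm _ _ pf) (ext_crit_perm _ _ pg).
  rewrite (ext_crit_cons Lf') (ext_crit_cons Lg') IHp.
  by move/addIr/addIr.
have pfg : perm_eq f' g'.
  apply: IH => //.
  - by rewrite size_rem // sf.
  - by apply/allP => y /mem_rem yf; exact: (allP Bf).
  - by apply/allP => y /mem_rem yg; exact: (allP Bg).
apply: perm_trans pf _; rewrite perm_sym; apply: perm_trans pg _.
by rewrite perm_cons perm_sym.
Qed.
End M.

Unset Implicit Arguments.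
Theorem theorem7 (R : realType) (f g : seq (R * R)) :
  is_barcode f -> is_barcode g -> ext_crit f = ext_crit g -> perm_eq f g.
Proof.
move=> Bf Bg E; apply: (@main R (size f)) => // p h.
by rewrite E.
Qed.
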